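(* Let $a=(p_a,Rd_a,Wt_a)\in\mathsf{Lab}$ and $\beta\in\mathsf{Lab}\uplus\underline{\mathsf{Lab}}$ with $\mathsf{und}(\beta)=(p_\beta,Rd_\beta,Wt_\beta)$, and assume $Wt_a\subseteq Rd_a$ and $Wt_\beta\subseteq Rd_\beta$. Suppose $A\to_{ann}^{a}A'$ and $A\to_{ann}^{\beta}A''$ with $a\;\iota_{lab}\;\beta$. Then there is an annotation DAG $A'''$ such that $A''\to_{ann}^{a}A'''$ and $\mathsf{diff}(A\to_{ann}^{a}A')=\mathsf{diff}(A''\to_{ann}^{a}A''')$.
   Context: Fix a set $\mathcal{R}$ of memory resources. Let $\mathsf{PID}=(\mathbb{N}_+)^*$ be the set of finite words over the positive integers, with $\preceq$ the prefix order. An annotation DAG is a triple $A=(V,E_R,E_W)$ such that: (1) $V\subseteq(\mathsf{PID}\times\mathbb{N})\cup\{\bot\}$ is finite, $\bot\in V$, and $(p,n)\in V$ implies $(p,n')\in V$ for all $n'\le n$; (2) $E_R,E_W\subseteq V\times\mathcal{R}\times V$, and $(v',r,v),(v'',r,v)\in E_R\cup E_W$ implies $v'=v''$; (3) $E_R\cap E_W=\varnothing$ and the directed graph $(V,E_R\cup E_W)$ is acyclic; (4) if $(v',r,v)\in E_W$ and $v'\neq\bot$ then $(v'',r,v')\in E_W$ for some $v''$; (5) $(v,r,v'),(v,r,v'')\in E_W$ implies $v'=v''$. For $r\in\mathcal{R}$, $\mathsf{last}(r,E_W)$ is $\bot$ if $E_W$ has no edge labelled $r$, and otherwise is the final node of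 the unique path from $\bot$ consisting of all $E_W$-edges labelled $r$. For $p\in\mathsf{PID}$, $\mathsf{max}_p(V)=\max\{n:(p,n)\in V\}$, or $-1$ if there is no such $n$. Let $\mathsf{Lab}=\mathsf{PID}\times2^{\mathcal{R}}\times2^{\mathcal{R}}$ and $\underline{\mathsf{Lab}}=\{\underline{a}:a\in\mathsf{Lab}\}$ a disjoint copy; $\mathsf{und}(a)=\mathsf{und}(\underline a)=a$. For $a=(p,Rd,Wt)\in\mathsf{Lab}$ and annotation DAGs $A_1=(V_1,E_{R1},E_{W1})$, $A_2=(V_2,E_{R2},E_{W2})$, write $A_1\to_{ann}^{a}A_2$ iff, with $v=(p,\mathsf{max}_p(V_1)+1)$ and $\mathsf{newedge}(r,E_W,v)=(\mathsf{last}(r,E_W),r,v)$: $V_2=V_1\cup\{v\}$, $E_{R2}=E_{R1}\cup\{\mathsf{newedge}(r,E_{W1},v): r\in Rd\setminus Wt\}$, $E_{W2}=E_{W1}\cup\{\mathsf{newedge}(r,E_{W1},v): r\in Wt\}$; and write $A_2\to_{ann}^{\underline a}A_1$ iff $A_1\to_{ann}^{a}A_2$. For $\alpha,\beta\in\mathsf{Lab}\uplus\underline{\mathsf{Lab}}$ with $\mathsf{und}(\alpha)=(p_1,Rd_1,Wt_1)$, $\mathsf{und}(\beta)=(p_2,Rd_2,Wt_2)$, define $\alpha\;\iota_{lab}\;\beta$ iff $p_1\not\preceq p_2$, $p_2\not\preceq p_1$, $Rd_1\cap Wt_2=\varnothing$ and $Rd_2\cap Wt_1=\varnothing$. For $o:(V,E_R,E_W)\to_{ann}^{\alpha}(V',E'_R,E'_W)$,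 $\mathsf{diff}(o)=(V'\setminus V,E'_R\setminus E_R,E'_W\setminus E_W)$ if $\alpha\in\mathsf{Lab}$ and $\mathsf{diff}(o)=(V\setminus V',E_R\setminus E'_R,E_W\setminus E'_W)$ if $\alpha\in\underline{\mathsf{Lab}}$. (In the paper, labels arise from basic blocks for which the set of written resources is contained in the set of read resources; this is recorded here as the hypothesis $Wt\subseteq Rd$.) *)

(* Defs.v *)
From Stdlib Require Import List PArith Relations.
Import ListNotations.
Set Implicit Arguments.

Definition PID := list positive.
Definition prefix (p1 p2 : PID) : Prop := exists s, p2 = p1 ++ s.

Definition Node := option (PID * nat).
Definition bot : Node := None.

Section Defs.
Variable Res : Type.

Definition Edge := (Node * Res * Node)%type.

Record annot := Annot {
  aV  : Node -> Prop;
  aER : Edge -> Prop;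
  aEW : Edge -> Prop }.

Definition step_rel (A : annot) (u v : Node) : Prop :=
  exists r, aER A (u, r, v) \/ aEW A (u, r, v).

Definition is_annot_dag (A : annot) : Prop :=
  (exists l : list Node, forall v, aV A v -> In v l) /\
  aV A bot /\
  (forall p n n', aV A (Some (p, n)) -> n' <= n -> aV A (Some (p, n'))) /\
  (forall v' r v, aER A (v', r, v) \/ aEW A (v', r, v) -> aV A v' /\ aV A v) /\
  (forall v' v'' r v, aER A (v', r, v) \/ aEW A (v', r, v) ->
                      aER A (v'', r, v) \/ aEW A (v'', r, v) -> v' = v'') /\
  (forall e, ~ (aER A e /\ aEW A e)) /\
  (forall v, ~ clos_trans Node (step_rel A) v v) /\
  (forall v' r v, aEW A (v', r, v) -> v' <> bot -> exists v'', aEW A (v'', r, v')) /\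
  (forall v r v' v'', aEW A (v, r, v') -> aEW A (v, r, v'') -> v' = v'').

Fixpoint r_path (EW : Edge -> Prop) (r : Res) (x : Node) (l : list Node) : Prop :=
  match l with
  | [] => True
  | y :: l' => EW (x, r, y) /\ r_path EW r y l'
  end.

Definition is_last (EW : Edge -> Prop) (r : Res) (u : Node) : Prop :=
  ((forall x y, ~ EW (x, r, y)) /\ u = bot) \/
  (exists l : list Node, l <> [] /\ r_path EW r bot l /\
     (forall x y, EW (x, r, y) -> exists l1 l2, bot :: l = l1 ++ x :: y :: l2) /\
     u = last l bot).

(* k = max_p(V) + 1 (so k = 0 when max_p(V) = -1) *)
Definition next_idx (V : Node -> Prop) (p : PID) (k : nat) : Prop :=
  (k = 0 /\ forall n, ~ V (Some (p, n))) \/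
  (exists n, k = S n /\ V (Some (p, n)) /\ forall n', V (Some (p, n')) -> n' <= n).

Definition Lab := (PID * (Res -> Prop) * (Res -> Prop))%type.
(* Lab ⊎ underlined Lab : inl a = a, inr a = underline a *)
Definition LabU := (Lab + Lab)%type.
Definition und (al : LabU) : Lab := match al with inl a => a | inr a => a end.

Definition ann_step (A1 : annot) (a : Lab) (A2 : annot) : Prop :=
  let '(p, Rd, Wt) := a in
  is_annot_dag A1 /\ is_annot_dag A2 /\
  exists k, next_idx (aV A1) p k /\
    let v := Some (p, k) in
    (forall x, aV A2 x <-> aV A1 x \/ x = v) /\
    (forall e, aER A2 e <-> aER A1 e \/
        exists r u, Rd r /\ ~ Wt r /\ is_last (aEW A1) r u /\ e = (u, r, v)) /\
    (forall e, aEW A2 e <-> aEW A1 e \/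
        exists r u, Wt r /\ is_last (aEW A1) r u /\ e = (u, r, v)).

Definition ann_stepU (A1 : annot) (al : LabU) (A2 : annot) : Prop :=
  match al with
  | inl a => ann_step A1 a A2
  | inr a => ann_step A2 a A1
  end.

Definition iota_lab (al be : LabU) : Prop :=
  let '(p1, Rd1, Wt1) := und al in
  let '(p2, Rd2, Wt2) := und be in
  ~ prefix p1 p2 /\ ~ prefix p2 p1 /\
  (forall r, ~ (Rd1 r /\ Wt2 r)) /\ (forall r, ~ (Rd2 r /\ Wt1 r)).

Definition diff (A1 : annot) (al : LabU) (A2 : annot) : annot :=
  match al with
  | inl _ => Annot (fun x => aV A2 x /\ ~ aV A1 x)
                   (fun e => aER A2 e /\ ~ aER A1 e)
                   (fun e => aEW A2 e /\ ~ aEW A1 e)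
  | inr _ => Annot (fun x => aV A1 x /\ ~ aV A2 x)
                   (fun e => aER A1 e /\ ~ aER A2 e)
                   (fun e => aEW A1 e /\ ~ aEW A2 e)
  end.

Definition annot_eq (A B : annot) : Prop :=
  (forall x, aV A x <-> aV B x) /\
  (forall e, aER A e <-> aER B e) /\
  (forall e, aEW A e <-> aEW B e).

Definition subset (X Y : Res -> Prop) : Prop := forall r, X r -> Y r.

End Defs.

(* Main.v *)
Require Import Defs.
From Stdlib Require Import List PArith Relations.
From Stdlib Require Import Lia Arith.
Import ListNotations.
Set Implicit Arguments.
Unset Strict Implicit.

Lemma last_cons_gen (T : Type) (t : list T) : forall (a x : T), last (a :: t) x = last t a.
Proof.
  induction t as [|b t IH]; intros a x; [reflexivity|].
  change (last (a :: b :: t) x) with (last (b :: t) x).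
  rewrite (IH b x), (IH b a). reflexivity.
Qed.

Lemma last_app_cons (T : Type) (l1 : list T) : forall x m d, last (l1 ++ x :: m) d = last m x.
Proof.
  induction l1 as [|c l1 IH]; intros x m d.
  - apply last_cons_gen.
  - change ((c :: l1) ++ x :: m) with (c :: (l1 ++ x :: m)). rewrite (@last_cons_gen _ (l1 ++ x :: m) c d). apply IH.
Qed.

Lemma r_path_ext (Res : Type) (E1 E2 : Edge Res -> Prop) r :
  (forall x y, E1 (x, r, y) <-> E2 (x, r, y)) ->
  forall l x, r_path E1 r x l <-> r_path E2 r x l.
Proof.
  intros H; induction l as [|a l IH]; intros x; simpl; [tauto|].
  rewrite H, IH. tauto.
Qed.

Lemma is_last_ext (Res : Type) (E1 E2 : Edge Res -> Prop) r u :
  (forall x y, E1 (x, r, y) <-> E2 (x, r, y)) ->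
  (is_last E1 r u <-> is_last E2 r u).
Proof.
  intros H; unfold is_last.
  split; intros [[H1 H2]|[l [Hl [Hp [Hc Hu]]]]].
  - left; split; auto. intros x y Hxy; apply (H1 x y); apply H; auto.
  - right; exists l; repeat split; auto.
    + apply (@r_path_ext _ E1 E2 r H); auto.
    + intros x y Hxy; apply Hc; apply H; auto.
  - left; split; auto. intros x y Hxy; apply (H1 x y); apply H; auto.
  - right; exists l; repeat split; auto.
    + apply (@r_path_ext _ E1 E2 r H); auto.
    + intros x y Hxy; apply Hc; apply H; auto.
Qed.

Lemma r_path_last_edge (Res : Type) (E : Edge Res -> Prop) r l :
  forall x, r_path E r x l -> l <> [] -> exists z, E (z, r, last l x).
Proof.
  induction l as [|a t IH]; intros x Hp Hne; [congruence|].
  destruct Hp as [He Hp]. rewrite last_cons_gen.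
  destruct t as [|b t']; [exists x; exact He|].
  apply IH; auto; discriminate.
Qed.

Lemma r_path_ct (Res : Type) (A : annot Res) r l :
  forall x, r_path (aEW A) r x l -> l <> [] ->
  clos_trans Node (step_rel A) x (last l x).
Proof.
  induction l as [|a t IH]; intros x Hp Hne; [congruence|].
  destruct Hp as [He Hp]. rewrite last_cons_gen.
  assert (Hs : step_rel A x a) by (exists r; right; exact He).
  destruct t as [|b t']; [apply t_step; exact Hs|].
  eapply t_trans; [apply t_step; exact Hs|]. apply IH; auto; discriminate.
Qed.

Lemma r_path_suffix (Res : Type) (E : Edge Res -> Prop) r l1 :
  forall h t x m, r_path E r h t -> h :: t = l1 ++ x :: m -> r_path E r x m.
Proof.
  induction l1 as [|c l1 IH]; intros h t x m Hp Heq; simpl in Heq.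
  - injection Heq as -> ->. exact Hp.
  - injection Heq as -> Ht. destruct t as [|y t'].
    + destruct l1; discriminate.
    + destruct Hp as [_ Hp]. eapply IH; eauto.
Qed.

Lemma no_out_last (Res : Type) (A : annot Res) r l y :
  (forall v, ~ clos_trans Node (step_rel A) v v) ->
  r_path (aEW A) r bot l -> l <> [] ->
  (forall x y, aEW A (x, r, y) -> exists l1 l2, bot :: l = l1 ++ x :: y :: l2) ->
  ~ aEW A (last l bot, r, y).
Proof.
  intros Hac Hp Hne Hc He.
  destruct (Hc _ _ He) as [l1 [l2 Heq]].
  assert (Hlast : last l bot = last (y :: l2) (last l bot)).
  { transitivity (last (bot :: l) bot); [symmetry; apply last_cons_gen|]. rewrite Heq at 1. apply last_app_cons. }
  assert (Hs : r_path (aEW A) r (last l bot) (y :: l2)).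
  { exact (r_path_suffix Hp Heq). }
  pose proof (r_path_ct Hs ltac:(discriminate)) as Hct.
  rewrite <- Hlast in Hct. exact (Hac _ Hct).
Qed.

Lemma r_path_prefix_or (Res : Type) (E : Edge Res -> Prop) r :
  (forall v v' v'', E (v, r, v') -> E (v, r, v'') -> v' = v'') ->
  forall l l' x, r_path E r x l -> r_path E r x l' ->
  (exists m, l' = l ++ m) \/ (exists m, l = l' ++ m).
Proof.
  intros H5; induction l as [|a t IH]; intros l' x Hp Hp'.
  - left; exists l'; reflexivity.
  - destruct l' as [|a' t'].
    + right; exists (a :: t); reflexivity.
    + destruct Hp as [He Hp]; destruct Hp' as [He' Hp'].
      assert (a = a') by (eapply H5; eauto). subst a'.
      destruct (IH t' a Hp Hp') as [[m Hm]|[m Hm]];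
        [left|right]; exists m; simpl; congruence.
Qed.

Lemma r_path_app (Res : Type) (E : Edge Res -> Prop) r l :
  forall x m, r_path E r x (l ++ m) -> r_path E r (last l x) m.
Proof.
  induction l as [|a t IH]; intros x m Hp; simpl in Hp; [exact Hp|].
  destruct Hp as [_ Hp]. rewrite last_cons_gen. apply IH; auto.
Qed.

Ltac dag_destr H :=
  let Hfin := fresh "Hfin" in let Hbot := fresh "Hbot" in
  let Hdown := fresh "Hdown" in let Hend := fresh "Hend" in
  let Huniq := fresh "Huniq" in let Hdisj := fresh "Hdisj" in
  let Hac := fresh "Hac" in let H4 := fresh "H4" in let H5 := fresh "H5" in
  destruct H as [Hfin [Hbot [Hdown [Hend [Huniq [Hdisj [Hac [H4 H5]]]]]]]].

Lemma is_last_unique (Res : Type) (A : annot Res) r u u' :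
  is_annot_dag A -> is_last (aEW A) r u -> is_last (aEW A) r u' -> u = u'.
Proof.
  intros HD. dag_destr HD.
  intros [[N1 E1]|[l [Hl [Hp [Hc Hu]]]]] [[N1' E1']|[l' [Hl' [Hp' [Hc' Hu']]]]].
  - congruence.
  - destruct l' as [|a t]; [congruence|]. destruct Hp' as [He _]. exfalso; eapply N1; eauto.
  - destruct l as [|a t]; [congruence|]. destruct Hp as [He _]. exfalso; eapply N1'; eauto.
  - subst u u'.
    assert (H5r : forall v v' v'', aEW A (v, r, v') -> aEW A (v, r, v'') -> v' = v'')
      by (intros; eapply H5; eauto).
    destruct (r_path_prefix_or H5r Hp Hp') as [[m Hm]|[m Hm]].
    + destruct m as [|y m'].
      * rewrite app_nil_r in Hm; congruence.
      * exfalso. subst l'. pose proof (r_path_app Hp') as Hq. destruct Hq as [Hq _].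
        exact (no_out_last Hac Hp Hl Hc Hq).
    + destruct m as [|y m'].
      * rewrite app_nil_r in Hm; congruence.
      * exfalso. subst l. pose proof (r_path_app Hp) as Hq. destruct Hq as [Hq _].
        exact (no_out_last Hac Hp' Hl' Hc' Hq).
Qed.

Lemma is_last_inV (Res : Type) (A : annot Res) r u :
  is_annot_dag A -> is_last (aEW A) r u -> aV A u.
Proof.
  intros HD. dag_destr HD.
  intros [[_ ->]|[l [Hl [Hp [Hc ->]]]]]; auto.
  destruct (r_path_last_edge Hp Hl) as [z Hz].
  destruct (Hend _ _ _ (or_intror Hz)); auto.
Qed.

Lemma last_no_out (Res : Type) (A : annot Res) r u y :
  is_annot_dag A -> is_last (aEW A) r u -> ~ aEW A (u, r, y).
Proof.
  intros HD. dag_destr HD.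
  intros [[N _]|[l [Hl [Hp [Hc ->]]]]].
  - apply N.
  - exact (no_out_last Hac Hp Hl Hc).
Qed.

Lemma next_idx_notin (V : Node -> Prop) p k : next_idx V p k -> ~ V (Some (p, k)).
Proof.
  intros [[-> H]|[n [-> [Hn Hm]]]]; [apply H|].
  intro HS; specialize (Hm _ HS); lia.
Qed.

Lemma next_idx_ext (V1 V2 : Node -> Prop) p k :
  (forall n, V1 (Some (p, n)) <-> V2 (Some (p, n))) -> next_idx V1 p k -> next_idx V2 p k.
Proof.
  intros H [[-> H1]|[n [-> [Hn Hm]]]].
  - left; split; auto. intros n Hn; apply (H1 n); apply H; auto.
  - right; exists n; repeat split; auto.
    + apply H; auto.
    + intros n' Hn'; apply Hm; apply H; auto.
Qed.

Definition build (Res : Type) (A0 : annot Res) (p : PID) (k : nat) (Rd Wt : Res -> Prop)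
  : annot Res :=
  Annot (fun x => aV A0 x \/ x = Some (p, k))
    (fun e => aER A0 e \/ exists r u, Rd r /\ ~ Wt r /\ is_last (aEW A0) r u /\ e = (u, r, Some (p, k)))
    (fun e => aEW A0 e \/ exists r u, Wt r /\ is_last (aEW A0) r u /\ e = (u, r, Some (p, k))).

Lemma build_cases (Res : Type) (A0 : annot Res) p k Rd Wt e :
  aER (build A0 p k Rd Wt) e \/ aEW (build A0 p k Rd Wt) e ->
  (aER A0 e \/ aEW A0 e) \/ (exists r u, is_last (aEW A0) r u /\ e = (u, r, Some (p, k))).
Proof.
  simpl. intros [[H|[r [u [_ [_ [H1 H2]]]]]]|[H|[r [u [_ [H1 H2]]]]]]; auto;
    right; exists r, u; auto.
Qed.

Lemma build_dag (Res : Type) (A0 : annot Res) p k Rd Wt :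
  is_annot_dag A0 -> next_idx (aV A0) p k -> is_annot_dag (build A0 p k Rd Wt).
Proof.
  intros HD Hn. pose proof HD as HD0. dag_destr HD.
  pose proof (next_idx_notin Hn) as Hv.
  assert (Hct : forall x y, clos_trans Node (step_rel (build A0 p k Rd Wt)) x y ->
            x <> Some (p, k) /\ (y = Some (p, k) \/ clos_trans Node (step_rel A0) x y)).
  { intros x y H. apply clos_trans_t1n in H. induction H as [x y Hs|x y z Hs _ IH].
    - destruct Hs as [r Hs]. destruct (build_cases Hs) as [Ho|[r0 [u [Hl He]]]].
      + destruct (Hend _ _ _ Ho) as [Hx Hy]. split; [intro; subst; auto|].
        right; apply t_step; exists r; auto.
      + injection He as -> -> ->. split; auto.
        intro E; apply Hv; rewrite <- E; eapply is_last_inV; eauto.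
    - destruct Hs as [r Hs]. destruct IH as [Hy IH].
      destruct (build_cases Hs) as [Ho|[r0 [u [Hl He]]]].
      + destruct (Hend _ _ _ Ho) as [Hx _]. split; [intro; subst; auto|].
        destruct IH as [IH|IH]; auto. right; eapply t_trans; eauto.
        apply t_step; exists r; auto.
      + injection He as -> -> ->. congruence. }
  unfold is_annot_dag.
  split; [|split; [|split; [|split; [|split; [|split; [|split; [|split]]]]]]].
  - destruct Hfin as [l Hl]. exists (Some (p, k) :: l). simpl.
    intros x [Hx|Hx]; [right; auto|left; auto].
  - simpl; left; auto.
  - simpl. intros p' n n' [H|H] Hle; [left; eauto|].
    injection H as -> ->.
    destruct Hn as [[-> _]|[n0 [-> [Hn0 Hmax]]]].
    + assert (n' = 0) by lia; subst; right; reflexivity.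
    + destruct (Nat.eq_dec n' (S n0)) as [E|E]; [subst; right; auto|].
      left; apply Hdown with n0; auto; lia.
  - intros v' r y H. destruct (build_cases H) as [Ho|[r0 [u [Hl He]]]].
    + destruct (Hend _ _ _ Ho); simpl; auto.
    + injection He as -> -> ->. simpl; split; [left; eapply is_last_inV; eauto|right; auto].
  - intros v' v'' r y H1 H2.
    destruct (build_cases H1) as [Ho1|[r1 [u1 [Hl1 He1]]]];
    destruct (build_cases H2) as [Ho2|[r2 [u2 [Hl2 He2]]]].
    + eapply Huniq; eauto.
    + injection He2 as -> -> ->. destruct (Hend _ _ _ Ho1) as [_ Hy]; contradiction.
    + injection He1 as -> -> ->. destruct (Hend _ _ _ Ho2) as [_ Hy]; contradiction.
    + injection He1 as -> -> ->. injection He2 as -> ->. eapply is_last_unique; eauto.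
  - simpl. intros e [[H1|[r1 [u1 [_ [N1 [_ He1]]]]]] [H2|[r2 [u2 [W2 [_ He2]]]]]].
    + eapply Hdisj; eauto.
    + subst e. destruct (Hend _ _ _ (or_introl H1)); contradiction.
    + subst e. destruct (Hend _ _ _ (or_intror H2)); contradiction.
    + rewrite He1 in He2. injection He2 as _ ->. contradiction.
  - intros x H. destruct (Hct _ _ H) as [Hx [Hy|Hy]]; [congruence|eapply Hac; eauto].
  - simpl. intros v' r y [H|[r0 [u [_ [Hl He]]]]] Hne.
    + destruct (H4 _ _ _ H Hne) as [z Hz]; exists z; left; auto.
    + injection He as -> -> ->.
      destruct Hl as [[_ E]|[l [Hl [Hp [_ ->]]]]]; [contradiction|].
      destruct (r_path_last_edge Hp Hl) as [z Hz]; exists z; left; auto.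
  - simpl. intros x r y y' [H|[r0 [u [_ [Hl He]]]]] [H'|[r0' [u' [_ [Hl' He']]]]].
    + eapply H5; eauto.
    + injection He' as -> -> ->. exfalso; eapply last_no_out; eauto.
    + injection He as -> -> ->. exfalso; eapply last_no_out; eauto.
    + injection He as -> -> ->. injection He' as _ _ ->. reflexivity.
Qed.

Lemma dag_end (Res : Type) (A : annot Res) x r y :
  is_annot_dag A -> aER A (x, r, y) \/ aEW A (x, r, y) -> aV A x /\ aV A y.
Proof. intros HD. dag_destr HD. apply Hend. Qed.

Theorem mainTheorem3 (Res : Type) (a : Lab Res) (be : LabU Res)
  (A A' A'' : annot Res) :
  subset (snd a) (snd (fst a)) ->
  subset (snd (und be)) (snd (fst (und be))) ->
  ann_step A a A' ->
  ann_stepU A be A'' ->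
  iota_lab (inl a) be ->
  exists A''' : annot Res,
    ann_step A'' a A''' /\
    annot_eq (diff A (inl a) A') (diff A'' (inl a) A''').
Proof.
  intros Hsub1 _ Hstep Hbe Hiota.
  destruct a as [[p Rd] Wt]. simpl in Hsub1.
  destruct Hstep as [HDA [HDA' [k [Hk [HV [HER HEW]]]]]].
  assert (Hcommon : is_annot_dag A'' /\
    (forall n, aV A (Some (p, n)) <-> aV A'' (Some (p, n))) /\
    (forall r, Rd r -> forall x y, aEW A (x, r, y) <-> aEW A'' (x, r, y))).
  { destruct be as [[[pb Rdb] Wtb]|[[pb Rdb] Wtb]]; simpl in Hbe, Hiota;
      destruct Hiota as [Hi1 [Hi2 [Hi3 Hi4]]];
      assert (Hpq : p <> pb) by (intro; subst; apply Hi1; exists []; rewrite app_nil_r; auto).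
    - destruct Hbe as [_ [HD'' [kb [_ [HV'' [_ HEW'']]]]]].
      split; [auto|split].
      + intro n; rewrite HV''. split; [left; auto|].
        intros [H|H]; auto. injection H; intros; congruence.
      + intros r Hr x y. rewrite HEW''. split; [left; auto|].
        intros [H|[r0 [u [Hw [_ He]]]]]; auto.
        injection He; intros; subst. exfalso; apply (Hi3 r0); auto.
    - destruct Hbe as [HD'' [_ [kb [_ [HV'' [_ HEW'']]]]]].
      split; [auto|split].
      + intro n; rewrite HV''. split; [|left; auto].
        intros [H|H]; auto. injection H; intros; congruence.
      + intros r Hr x y. rewrite HEW''. split; [|left; auto].
        intros [H|[r0 [u [Hw [_ He]]]]]; auto.
        injection He; intros; subst. exfalso; apply (Hi3 r0); auto. }
  destruct Hcommon as [HD'' [HVs HEs]].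
  assert (Hk'' : next_idx (aV A'') p k) by (eapply next_idx_ext; eauto).
  assert (Hlast : forall r u, Rd r -> (is_last (aEW A) r u <-> is_last (aEW A'') r u))
    by (intros; apply is_last_ext; auto).
  pose proof (next_idx_notin Hk) as HvA.
  pose proof (next_idx_notin Hk'') as HvA''.
  exists (build A'' p k Rd Wt). split.
  - unfold ann_step. split; [exact HD''|split; [apply build_dag; auto|]].
    exists k. split; auto. simpl. split; [|split]; intros; tauto.
  - unfold annot_eq, diff; simpl. split; [|split].
    + intro x. rewrite HV. split.
      * intros [[H|H] H']; [contradiction|]. split; [right; auto|subst; auto].
      * intros [[H|H] H']; [contradiction|]. split; [right; auto|subst; auto].
    + intro e. rewrite HER. split.
      * intros [[H|[r [u [h1 [h2 [h3 h4]]]]]] H']; [contradiction|].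
        split; [right; exists r, u; repeat split; auto; apply Hlast; auto|].
        subst e; intro H; destruct (dag_end HD'' (or_introl H)); contradiction.
      * intros [[H|[r [u [h1 [h2 [h3 h4]]]]]] H']; [contradiction|].
        split; [right; exists r, u; repeat split; auto; apply Hlast; auto|].
        subst e; intro H; destruct (dag_end HDA (or_introl H)); contradiction.
    + intro e. rewrite HEW. split.
      * intros [[H|[r [u [h1 [h3 h4]]]]] H']; [contradiction|].
        split; [right; exists r, u; repeat split; auto; apply Hlast; auto|].
        subst e; intro H; destruct (dag_end HD'' (or_intror H)); contradiction.
      * intros [[H|[r [u [h1 [h3 h4]]]]] H']; [contradiction|].
        split; [right; exists r, u; repeat split; auto; apply Hlast; auto|].
        subst e; intro H; destruct (dag_end HDA (or_intror H)); contradiction.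
Qed.
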